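(* Let $N\ge1$, $\alpha>0$, $a_k,w_k\in\mathbb{C}$ with $a_k\neq0$ for $k=1,\dots,N$ and $\Re w_k\neq\Re w_l$ for $k\neq l$. For $k=1,\dots,N$, $s=0,\dots,N-1$ let $$A_{k,s}=(-1)^s\sum_{\substack{j_1<\dots<j_s\\ j_l\neq k}} e^{\frac{2\pi}{\alpha}(w_{j_1}+\dots+w_{j_s})},\qquad m_s(\xi)=\sum_{k=1}^N a_kA_{k,s}e^{2\pi\xi w_k}.$$ For $\theta\in\mathbb{R}$ let $B(\theta,N)$ be the $N\times N$ matrix with entries $B_{r,s}=m_{s}(\theta-r)$, $r=0,\dots,N-1$, $s=0,\dots,N-1$. Then $\det B(\theta,N)\neq0$ for every $\theta\in\mathbb{R}$.
   Context: In the definition of $A_{k,s}$ the sum is over all $s$-element subsets $\{j_1,\dots,j_s\}$ of $\{1,\dots,N\}\setminus\{k\}$, with $A_{k,0}=1$. *)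

(* Defs.v *)
From mathcomp Require Import all_boot all_order all_algebra.
From mathcomp Require Import reals sequences exp trigo.
From mathcomp Require Import complex.
Set Implicit Arguments. Unset Strict Implicit. Unset Printing Implicit Defensive.
Import Order.TTheory GRing.Theory Num.Theory.
Local Open Scope ring_scope.
Local Open Scope complex_scope.

Definition cexp (R : realType) (z : R[i]) : R[i] :=
  (expR (complex.Re z))%:C * (cos (complex.Im z) +i* sin (complex.Im z)).

Definition Acoef (R : realType) (N : nat) (alpha : R) (w : 'I_N -> R[i])
    (k : 'I_N) (s : nat) : R[i] :=
  (-1) ^+ s *
  \sum_(S : {set 'I_N} | (k \notin S) && (#|S| == s))
     cexp (((2 * pi / alpha)%R)%:C * \sum_(j in S) w j).

Definition mfun (R : realType) (N : nat) (alpha : R) (a w : 'I_N -> R[i])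
    (s : nat) (xi : R) : R[i] :=
  \sum_(k < N) a k * Acoef alpha w k s * cexp (((2 * pi * xi)%R)%:C * w k).

Definition Bmat (R : realType) (N : nat) (alpha : R) (a w : 'I_N -> R[i])
    (theta : R) : 'M[R[i]]_N :=
  \matrix_(r < N, s < N) mfun alpha a w s (theta - (r : nat)%:R).

(* Main.v *)
Require Import Defs.
From mathcomp Require Import all_boot all_order all_algebra.
From mathcomp Require Import reals sequences exp trigo.
From mathcomp Require Import complex.
From mathcomp Require Import ring lra.
Import Order.TTheory GRing.Theory Num.Theory.
Local Open Scope ring_scope.
Local Open Scope complex_scope.
Section S.
Variable R : realType.
Implicit Types x y : R[i].
Lemma cexpD x y : cexp (x + y) = cexp x * cexp y.
Proof.
case: x => a b; case: y => c d; rewrite /cexp /=.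
rewrite expRD cosD sinD.
by apply/eqP; rewrite eq_complex /=; apply/andP; split; apply/eqP; ring.
Qed.
Lemma cexp0 : cexp (0 : R[i]) = 1.
Proof.
rewrite /cexp /= expR0 cos0 sin0.
by apply/eqP; rewrite eq_complex /=; apply/andP; split; apply/eqP; ring.
Qed.
Lemma cexp_norm x : (complex.Re (cexp x))^+2 + (complex.Im (cexp x))^+2 = expR (complex.Re x) ^+ 2.
Proof.
case: x => a b; rewrite /cexp /=.
have h := cos2Dsin2 b.
rewrite -[RHS]mulr1 -h; ring.
Qed.
Lemma cexp_neq0 x : cexp x != 0.
Proof.
apply/negP => /eqP h.
have := cexp_norm x; rewrite h /= expr0n /= addr0.
move=> /esym /eqP; rewrite sqrf_eq0; apply/negP; exact: lt0r_neq0 (expR_gt0 _).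
Qed.
Lemma cexp_inj_Re x y : cexp x = cexp y -> complex.Re x = complex.Re y.
Proof.
move=> h.
have := cexp_norm x; rewrite h cexp_norm => /eqP.
rewrite eqf_sqr => /orP [/eqP /expR_inj //|/eqP h2].
have h1 := expR_gt0 (complex.Re x); have h3 := expR_gt0 (complex.Re y).
rewrite h2 oppr_gt0 in h3; by move: (lt_trans h3 h1); rewrite ltxx.
Qed.
Lemma cexpMn x n : cexp (x *+ n) = cexp x ^+ n.
Proof.
elim: n => [|n IH]; first by rewrite mulr0n cexp0.
by rewrite mulrS cexpD IH exprS.
Qed.
Lemma cexp_sum (I : finType) (P : pred I) (F : I -> R[i]) :
  cexp (\sum_(i | P i) F i) = \prod_(i | P i) cexp (F i).
Proof. exact: (big_morph _ cexpD cexp0). Qed.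
Lemma Re_mulC (r : R) x : complex.Re (r%:C * x) = r * complex.Re x.
Proof. by case: x => a b /=; ring. Qed.
Lemma card_lt (N : nat) (k : 'I_N) (S : {set 'I_N}) : k \notin S -> (#|S| < N)%N.
Proof.
move=> kS; have : S \proper [set: 'I_N].
  by rewrite properT; apply: contraNneq kS => ->; rewrite inE.
by move/proper_card; rewrite cardsT card_ord.
Qed.

Lemma poly_id (N : nat) (alpha : R) (w : 'I_N -> R[i]) k (y : R[i]) :
  \sum_(s < N) Acoef alpha w k s * y ^+ s =
  \prod_j ((if j == k then 0 else - (cexp ((2 * pi / alpha)%:C * w j) * y)) + 1).
Proof.
set u := fun j => cexp ((2 * pi / alpha)%:C * w j).
set g := fun S : {set 'I_N} => (-1) ^+ #|S| * \prod_(j in S) u j * y ^+ #|S|.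
transitivity (\sum_(S : {set 'I_N} | k \notin S) g S).
  transitivity (\sum_(s < N) \sum_(S : {set 'I_N}) 
     (if (k \notin S) && (#|S| == s) then g S else 0)).
    apply: eq_bigr => s _; rewrite /Acoef mulr_sumr mulr_suml big_mkcond /=.
    apply: eq_bigr => S _; case: ifP => // /andP [kS /eqP <-].
    by rewrite /g mulr_sumr? cexp_sum; congr (_ * _ * _).
  rewrite exchange_big [RHS]big_mkcond /=; apply: eq_bigr => S _.
  case kS: (k \in S) => /=; first by rewrite big1.
  have hS := @card_lt N k S (negbT kS).
  rewrite (bigD1 (Ordinal hS)) //= eqxx big1 ?addr0 // => s /negbTE ns.
  case: eqP => // hs; move: ns; suff -> : s = Ordinal hS by rewrite eqxx.
  by apply: val_inj => /=.
rewrite bigA_distr [RHS](bigID (fun J : {set 'I_N} => k \in J)) /=.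
rewrite [X in X + _]big1 ?add0r; last first.
  by move=> J kJ; rewrite (bigD1 k) //= kJ eqxx mul0r.
apply: eq_big => // J kJ.
rewrite -big_mkcond /= (eq_bigr (fun j => - (u j * y))); last first.
  by move=> j jJ; case: eqP => // ejk; move: kJ; rewrite -ejk jJ.
rewrite prodrN big_split /= prodr_const /g; ring.
Qed.

Lemma Re_lin (r : R) x y :
  complex.Re (r%:C * x + - (r%:C * y)) = r * (complex.Re x - complex.Re y).
Proof. by case: x => ? ?; case: y => ? ? /=; ring. Qed.

End S.

Theorem lemma5p1 (R : realType) (N : nat) (hN : (1 <= N)%N) (alpha : R)
    (halpha : 0 < alpha) (a w : 'I_N -> R[i])
    (ha : forall k, a k != 0)
    (hw : forall k l, k != l -> complex.Re (w k) != complex.Re (w l))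
    (theta : R) :
  \det (Bmat alpha a w theta) != 0.
Proof.
set c := 2 * pi / alpha.
have hc : c != 0 by rewrite /c mulf_neq0 ?invr_neq0 ?mulf_neq0 ?lt0r_neq0 ?pi_gt0.
set u := fun j => cexp ((2 * pi / alpha)%:C * w j).
set v := fun l => cexp (- (c%:C * w l)).
pose Am := \matrix_(k < N, s < N) (a k * Acoef alpha w k s).
pose W := \matrix_(s < N, l < N) (v l ^+ s).
pose d := \row_(k < N) (a k * \prod_j ((if j == k then 0 else - (u j * v k)) + 1)).
have AW : Am *m W = diag_mx d.
  apply/matrixP => k l; rewrite /Am /W /d !mxE.
  rewrite (eq_bigr (fun j : 'I_N => a k * (Acoef alpha w k j * v l ^+ j))); last by move=> j _; rewrite !mxE mulrA.
  rewrite -mulr_sumr poly_id.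
  case: (eqVneq k l) => [<-|nkl]; first by rewrite mulr1n.
  rewrite ?(negbTE nkl) mulr0n (bigD1 l) //= eq_sym (negbTE nkl).
  by rewrite /u /v -cexpD subrr cexp0 addNr mul0r mulr0.
have hd : \det (diag_mx d) != 0.
  rewrite det_diag; apply/prodf_neq0 => k _; rewrite mxE mulf_neq0 //.
  apply/prodf_neq0 => j _.
  case: ifP => [_|/negbT njk]; first by rewrite add0r oner_neq0.
  apply/negP; rewrite addrC subr_eq0 => /eqP h.
  move: h; rewrite /u /v -cexpD -cexp0 => /cexp_inj_Re.
  rewrite Re_lin /= => /eqP; rewrite eq_sym mulf_eq0 (negbTE hc) /= subr_eq0.
  by apply/negP; apply: hw njk.
have detAm : \det Am != 0.
  by move: hd; rewrite -AW det_mulmx mulf_eq0 negb_or => /andP[].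
set z := fun k => cexp ((- (2 * pi))%:C * w k).
set e := fun k => cexp ((2 * pi * theta)%:C * w k).
have BM : Bmat alpha a w theta =
    (Vandermonde N (\row_k z k) *m diag_mx (\row_k e k)) *m Am.
  apply/matrixP => r s; rewrite !mxE /mfun; apply: eq_bigr => k _.
  rewrite mul_mx_diag !mxE /z /e -cexpMn mulrC -cexpD; congr (cexp _ * _).
  by rewrite !rmorphM rmorphB rmorphN rmorph_nat -mulr_natr; ring.
rewrite BM !det_mulmx det_diag det_Vandermonde !mulf_neq0 //.
  apply/prodf_neq0 => i _; apply/prodf_neq0 => j ij; rewrite !mxE subr_eq0.
  apply/negP => /eqP /cexp_inj_Re; rewrite !Re_mulC => /eqP.
  rewrite (inj_eq (mulfI _)); last by rewrite oppr_eq0 mulf_neq0 ?lt0r_neq0 ?pi_gt0.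
  by apply/negP; apply: hw; rewrite neq_ltn ij orbT.
by apply/prodf_neq0 => k _; rewrite mxE cexp_neq0.
Qed.
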